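(* Let $\mathbb{F}$ be an infinite field, $n\ge1$, and for $i=1,\dots,n$ let $m_i\ge 2$ and $L_i\ge1$ be integers. Put $R_i=\frac{m_i^{L_i}-1}{m_i-1}$, $D_i=\prod_{k=1}^{i-1}R_k$ (so $D_1=1$), $K_0=\prod_{i=1}^nR_i$, $N=\prod_{i=1}^nL_i$, and $e_i(s)=\frac{m_i^{s-1}-1}{m_i-1}=1+m_i+\dots+m_i^{s-2}$ for $s=1,\dots,L_i$ (with $e_i(1)=0$). In the sliced-contraction setting described in the context, define for $x\in\mathbb{F}$ the encoded tensors $$\tilde A^{(i,j)}(x)=\sum_{s=1}^{L_i}A^{(i,j)}_{s}\,x^{D_i\,e_i(s)}\qquad (j=1,\dots,m_i),$$ and $g(x)=\Phi\big(\tilde A^{(1,1)}(x),\dots,\tilde A^{(1,m_1)}(x),\dots,\tilde A^{(n,1)}(x),\dots,\tilde A^{(n,m_n)}(x)\big)$. Then $g$ is a polynomial in $x$ with coefficients in $W$ of degree at most $K_0-1$, and for each $(s_1,\dots,s_n)$ the coefficient of $x^{\sum_i D_i m_i e_i(s_i)}$ in $g$ equals the sliced partition $\sigma_{s_1\cdots s_n}$ (these $N$ exponents are pairwise distinct, and no other product of slices contributes to them). Consequently, for every integer $f\ge0$, the scheme with $K=f+K_0$ workers, worker $k$ computing $g(x_k)$ for pairwise distinct $x_1,\dots,x_K\in\mathbb{F}$, allows the master to recover every $\sigma_{s_1\cdots s_n}$ and hence $\sigma_{\mathrm{final}}$ from the outputs of any $K_0$ workers. Hence the $f$-resilient number $f+\prod_{i=1}^n\frac{m_i^{L_i}-1}{m_i-1}$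 is achievable, with gain compared to naive replication $$\Delta=\Big(\prod_{i=1}^nL_i-1\Big)(f+1)-\prod_{i=1}^n\frac{m_i^{L_i}-1}{m_i-1}+1.$$
   Context: Setting (sliced parallel tensor network contraction). A tensor network is contracted in parallel by ''slicing'' $n$ of its closed indices: index $i$ has dimension $L_i$ and is shared by $m_i$ tensors (an ''$m_i$-node index''), and the sliced indices are pairwise non-adjacent, i.e. no tensor carries two sliced indices. Fixing the value $s_i\in\{1,\dots,L_i\}$ of each sliced index turns each of the $m_i$ tensors attached to index $i$ into a sliced subtensor $A^{(i,j)}_{s_i}\in V_{i,j}$ ($j=1,\dots,m_i$), and contracting the rest of the network (all tensors not attached to sliced indices, together with all non-sliced indices) is a multilinear map $\Phi:\prod_{i=1}^n\prod_{j=1}^{m_i}V_{i,j}\to W$ between finite-dimensional vector spaces over an infinite field $\mathbb{F}$. The sliced partition for $(s_1,\dots,s_n)$ is $\sigma_{s_1\cdots s_n}=\Phi(A^{(1,1)}_{s_1},\dots,A^{(1,m_1)}_{s_1},\dots,A^{(n,1)}_{s_n},\dots,A^{(n,m_n)}_{s_n})$, and the desired output is $\sigma_{\mathrm{final}}=\sum_{s_1,\dots,s_n}\sigma_{s_1\cdots s_n}$; there are $N=\prod_i L_i$ sliced partitions. Computing model: a master distributes work to workers; each worker evaluates $\Phi$ once on one input from each $V_{i,j}$ (so it has the same computational cost as computing one sliced partition) and returns the result; up to $f$ workers may fail, and nothing is recovered from a failed worker. The $f$-resilient number of a scheme is the total number of workers required so that $\sigma_{\mathrm{final}}$ can be retrieved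 despite any $f$ worker failures. Naive replication (each of the $N$ sliced partitions computed by $f+1$ workers) has $f$-resilient number $N(f+1)$; the gain of a scheme is $N(f+1)$ minus its $f$-resilient number. *)

(* Defs.v *)
From HB Require Import structures.
From mathcomp Require Import all_boot all_order all_algebra.
Set Implicit Arguments. Unset Strict Implicit. Unset Printing Implicit Defensive.
Import Order.TTheory GRing.Theory Num.Theory.
Local Open Scope ring_scope.

(* Slices are 0-indexed: paper's s in {1..L} is our s' = s - 1 in 'I_L. *)

Definition ecoef (m s : nat) : nat := ((m ^ s - 1) %/ (m - 1))%N.

Definition Rnum (m L : nat) : nat := ((m ^ L - 1) %/ (m - 1))%N.

Definition Dnum (n : nat) (m L : 'I_n -> nat) (i : 'I_n) : nat :=
  (\prod_(k < n | (k < i)%N) Rnum (m k) (L k))%N.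

Definition K0num (n : nat) (m L : 'I_n -> nat) : nat :=
  (\prod_(i < n) Rnum (m i) (L i))%N.

Definition Nnum (n : nat) (L : 'I_n -> nat) : nat := (\prod_(i < n) L i)%N.

(* The positions (i, j), j < m_i, of the sliced subtensors. *)
Definition slot (n : nat) (m : 'I_n -> nat) : finType := {i : 'I_n & 'I_(m i)}.

Definition sliceidx (n : nat) (L : 'I_n -> nat) : finType :=
  {dffun forall i : 'I_n, 'I_(L i)}.

Definition multilinear (F : fieldType) (I : eqType) (V : I -> lmodType F)
  (W : lmodType F) (Phi : (forall i, V i) -> W) : Prop :=
  forall (a : forall i, V i) (i : I) (c : F) (u v : V i),
    Phi (dfwith a (c *: u + v)) = c *: Phi (dfwith a u) + Phi (dfwith a v).

Section Scheme.
Variables (F : fieldType) (n : nat) (m L : 'I_n -> nat).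
Variables (W : vectType F) (V : slot m -> vectType F).
Variable Phi : (forall p : slot m, V p) -> W.
Variable A : forall p : slot m, 'I_(L (tag p)) -> V p.

Definition encoded (x : F) (p : slot m) : V p :=
  \sum_(s < L (tag p)) x ^+ (Dnum m L (tag p) * ecoef (m (tag p)) s)%N *: @A p s.

Definition gfun (x : F) : W := Phi (fun p => encoded x p).

Definition sliced (s : sliceidx L) : W := Phi (fun p => @A p (s (tag p))).

Definition sigma_final : W := \sum_(s : sliceidx L) sliced s.

End Scheme.

Definition expo (n : nat) (m L : 'I_n -> nat) (s : sliceidx L) : nat :=
  (\sum_(i < n) Dnum m L i * m i * ecoef (m i) (s i))%N.

(* Main.v *)
Require Import Defs.
From HB Require Import structures.
From mathcomp Require Import all_boot all_order all_algebra zify.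
Import Order.TTheory GRing.Theory Num.Theory.
From Stdlib Require Import FunctionalExtensionality.

Lemma ecoefE m s : 1 < m -> ecoef m s = \sum_(j < s) m ^ j.
Proof.
move=> hm; rewrite /ecoef !subn1 predn_exp mulKn //; lia.
Qed.

Lemma ecoefS m s : 1 < m -> ecoef m s.+1 = (m * ecoef m s).+1.
Proof.
move=> hm; rewrite !ecoefE // big_ord_recl expn0 big_distrr /=.
by rewrite add1n; congr _.+1; apply: eq_bigr => i _; rewrite expnS.
Qed.

Lemma ecoef_lt m s t : 1 < m -> s < t -> ecoef m s < ecoef m t.
Proof.
move=> hm; have hm0 : 0 < m by apply: ltnW.
elim: t => // t IH.
rewrite ltnS leq_eqVlt => /orP [/eqP -> | /IH h].
  by rewrite ecoefS // ltnS leq_pmull.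
apply: (ltn_trans h); by rewrite ecoefS // ltnS leq_pmull.
Qed.

Lemma ecoef_le m s t : 1 < m -> s <= t -> ecoef m s <= ecoef m t.
Proof.
move=> hm; rewrite leq_eqVlt => /orP [/eqP -> // | h]; exact/ltnW/ecoef_lt.
Qed.

Lemma ecoef_ltE m s t : 1 < m -> (ecoef m s < ecoef m t) = (s < t).
Proof.
move=> hm; case: (ltnP s t) => h; first exact: ecoef_lt.
by apply/negbTE; rewrite -leqNgt; apply: ecoef_le.
Qed.

Lemma ecoef_inj m : 1 < m -> injective (ecoef m).
Proof.
move=> hm s t e; apply/eqP; rewrite eqn_leq (leqNgt s t) (leqNgt t s).
by rewrite -(ecoef_ltE _ t s hm) -(ecoef_ltE _ s t hm) e ltnn.
Qed.

Lemma Rnum_pos m L : 1 < m -> 0 < L -> 0 < Rnum m L.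
Proof.
move=> hm; case: L => // L _; rewrite /Rnum -/(ecoef m L.+1) ecoefS //.
Qed.

Lemma digit_lt m L (t : 'I_m -> nat) : 1 < m -> 0 < L -> (forall j, t j < L) ->
  \sum_(j < m) ecoef m (t j) < Rnum m L.
Proof.
move=> hm hL ht; rewrite /Rnum -/(ecoef m L).
have -> : L = L.-1.+1 by rewrite prednK.
rewrite ecoefS // ltnS.
apply: (@leq_trans (\sum_(j < m) ecoef m L.-1)).
  apply: leq_sum => j _; apply: ecoef_le => //.
  by have := ht j; case: (L) hL.

by rewrite sum_nat_const card_ord.
Qed.

Lemma mdigit_lt m L s : 1 < m -> s < L -> m * ecoef m s < Rnum m L.
Proof.
move=> hm hs; rewrite /Rnum -/(ecoef m L).
apply: (@leq_trans (ecoef m s.+1)); first by rewrite ecoefS.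
exact: ecoef_le.
Qed.

Lemma digit_eq m s (t : 'I_m -> nat) : 1 < m ->
  \sum_(j < m) ecoef m (t j) = m * ecoef m s -> forall j, t j = s.
Proof.
move=> hm he.
have hle : forall j, t j <= s.
  move=> j; rewrite leqNgt; apply/negP => hj.
  have h1 : ecoef m s.+1 <= ecoef m (t j) by apply: ecoef_le.
  have h2 : ecoef m (t j) <= \sum_(j < m) ecoef m (t j).
    by rewrite (bigD1 j) //= leq_addr.
  move: h1 h2; rewrite ecoefS // he.
  move: (m * ecoef m s) (ecoef m (t j)) => a b; lia.
have hz : \sum_(j < m) (ecoef m s - ecoef m (t j)) = 0.
  rewrite sumnB; last by move=> j _; apply: ecoef_le.
  by rewrite sum_nat_const card_ord he subnn.
move=> j; apply/eqP; rewrite eqn_leq hle /=.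
move/eqP: hz; rewrite sum_nat_eq0 => /forallP /(_ j) /=.
rewrite subn_eq0 => h; move: h; rewrite leqNgt ecoef_ltE // -leqNgt //.
Qed.


Lemma mr_lt k (r a : nat -> nat) : (forall i, i < k -> a i < r i) ->
  \sum_(i < k) (\prod_(j < i) r j) * a i < \prod_(j < k) r j.
Proof.
elim: k => [|k IH] h; first by rewrite big_ord0 big_ord0.
rewrite big_ord_recr big_ord_recr /=.
have h1 := IH (fun i hi => h i (ltnW hi)).
have h2 := h k (ltnSn k).
move: h1 h2; set X := \sum_(i < k) _; set P := \prod_(j < k) _ => h1 h2.
apply: (@leq_trans (P * (a k).+1)); first by rewrite mulnS; move: X P h1 => X P h1; lia.
by rewrite leq_mul2l h2 orbT.
Qed.

Lemma mr_inj k (r a b : nat -> nat) :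
  (forall i, i < k -> a i < r i) -> (forall i, i < k -> b i < r i) ->
  \sum_(i < k) (\prod_(j < i) r j) * a i = \sum_(i < k) (\prod_(j < i) r j) * b i ->
  forall i, i < k -> a i = b i.
Proof.
elim: k => [|k IH] ha hb; first by [].
rewrite !big_ord_recr /=.
have ha' := ha k (ltnSn k); have hb' := hb k (ltnSn k).
have h1 := @mr_lt k r a (fun i hi => ha i (ltnW hi)).
have h2 := @mr_lt k r b (fun i hi => hb i (ltnW hi)).
move: h1 h2; set X := \sum_(i < k) _ * a _; set Y := \sum_(i < k) _ * b _;
  set P := \prod_(j < k) _ => h1 h2 e.
have hP : 0 < P by apply: leq_ltn_trans h1.
have eq1 : a k = b k.
  have := congr1 (fun z => z %/ P) e => /=.
  by rewrite ![P * _]mulnC !divnDr ?dvdn_mull // !mulnK // (divn_small h1) (divn_small h2).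
have eq2 : X = Y by move: e; rewrite eq1 => /addIn.
move=> i; rewrite ltnS leq_eqVlt => /orP [/eqP -> // | hi].
exact: (IH (fun i hi => ha i (ltnW hi)) (fun i hi => hb i (ltnW hi)) eq2).
Qed.

Lemma radix_conv n (hn : 0 < n) (Rf a : 'I_n -> nat) :
  let i0 := Ordinal hn in
  \sum_(i < n) (\prod_(k < n | k < i) Rf k) * a i =
  \sum_(i < n) (\prod_(j < i) Rf (insubd i0 j)) * a (insubd i0 i).
Proof.
move=> i0; apply: eq_bigr => i _; rewrite valKd; congr (_ * _).
rewrite (eq_bigr (fun k : 'I_n => Rf (insubd i0 k))); last by move=> k _; rewrite valKd.
rewrite -(big_mkord (fun k => k < i) (fun k => Rf (insubd i0 k))).
rewrite -(big_nat_widen _ _ _ xpredT) ?(ltnW (ltn_ord i)) //.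
by rewrite big_mkord.
Qed.

Lemma radix_prod n (hn : 0 < n) (Rf : 'I_n -> nat) :
  \prod_(i < n) Rf i = \prod_(j < n) Rf (insubd (Ordinal hn) j).
Proof. by apply: eq_bigr => i _; rewrite valKd. Qed.

Lemma radix_lt n (hn : 0 < n) (Rf a : 'I_n -> nat) : (forall i, a i < Rf i) ->
  \sum_(i < n) (\prod_(k < n | k < i) Rf k) * a i < \prod_(i < n) Rf i.
Proof.
move=> h; rewrite radix_conv radix_prod.
exact: (@mr_lt n (fun j => Rf (insubd (Ordinal hn) j)) (fun j => a (insubd (Ordinal hn) j)) (fun j _ => h _)).
Qed.

Lemma radix_inj n (hn : 0 < n) (Rf a b : 'I_n -> nat) :
  (forall i, a i < Rf i) -> (forall i, b i < Rf i) ->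
  \sum_(i < n) (\prod_(k < n | k < i) Rf k) * a i =
  \sum_(i < n) (\prod_(k < n | k < i) Rf k) * b i -> forall i, a i = b i.
Proof.
move=> ha hb; rewrite !radix_conv => e i.
have := @mr_inj n (fun j => Rf (insubd (Ordinal hn) j)) (fun j => a (insubd (Ordinal hn) j))
  (fun j => b (insubd (Ordinal hn) j)) (fun j _ => ha _) (fun j _ => hb _) e i (ltn_ord i).
by rewrite valKd.
Qed.

Local Open Scope ring_scope.

Section Expand.
Variables (F : fieldType) (I : finType) (V : I -> lmodType F) (W : lmodType F).
Variables (Phi : (forall i, V i) -> W) (hPhi : multilinear Phi).

Lemma ml0 (a : forall i, V i) i : Phi (dfwith a (0 : V i)) = 0.
Proof.
have := hPhi a i 1 0 0; rewrite scaler0 add0r scale1r => /esym/eqP.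
by rewrite -subr_eq0 addrK => /eqP.
Qed.

Lemma mlsum (a : forall i, V i) i (X : finType) (P : pred X) (c : X -> F) (v : X -> V i) :
  Phi (dfwith a (\sum_(x | P x) c x *: v x)) = \sum_(x | P x) c x *: Phi (dfwith a (v x)).
Proof.
apply: (big_rec2 (fun y1 y2 => Phi (dfwith a y1) = y2)); first exact: ml0.
by move=> x y1 y2 _ <-; rewrite hPhi.
Qed.

Lemma cons_dfwith (k : I) (s : seq I) (f a : forall i, V i) :
  (fun i => if i \in k :: s then f i else a i) =
  dfwith (fun i => if i \in s then f i else a i) (f k).
Proof.
apply: functional_extensionality_dep => i.
case: dfwithP => [|j hj]; first by rewrite in_cons eqxx.
by rewrite in_cons eq_sym (negbTE hj).
Qed.

Lemma dfwith_if (k : I) (s : seq I) (ks : k \notin s) (f a : forall i, V i) (x : V k) :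
  dfwith (fun i => if i \in s then f i else a i) x =
  (fun i => if i \in s then f i else dfwith a x i).
Proof.
apply: functional_extensionality_dep => i.
case: (eqVneq k i) => [<-|hki]; first by rewrite !dfwith_in (negbTE ks).
by rewrite !dfwith_out.
Qed.

Variables (J : I -> finType) (t0 : forall i, J i) (w : forall i, J i -> F)
  (u : forall i, J i -> V i).

Local Notation T := {dffun forall i, J i}.

Definition upd (t : T) (k : I) (j : J k) : T := finfun (fun i => dfwith (fun i => t i) j i).

Arguments upd t [k] j.

Lemma updE (t : T) k (j : J k) i : upd t j i = dfwith (fun i => t i) j i.
Proof. by rewrite /upd ffunE. Qed.

Lemma upd_in (t : T) k (j : J k) : upd t j k = j.
Proof. by rewrite updE dfwith_in. Qed.

Lemma upd_out (t : T) k (j : J k) i : k != i -> upd t j i = t i.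
Proof. by move=> ki; rewrite updE dfwith_out. Qed.

Definition Qs (s : seq I) (t : T) : bool := [forall i, (i \notin s) ==> (t i == t0 i)].

Lemma expand_seq (s : seq I) : uniq s -> forall a : forall i, V i,
  Phi (fun i => if i \in s then \sum_(j : J i) w i j *: u i j else a i) =
  \sum_(t : T | Qs s t) (\prod_(i <- s) w i (t i)) *:
      Phi (fun i => if i \in s then u i (t i) else a i).
Proof.
elim: s => [|k s IH].
  move=> _ a /=.
  have -> : (fun i => if i \in [::] then \sum_(j : J i) w i j *: u i j else a i) = a.
    by apply: functional_extensionality_dep.
  rewrite (big_pred1 (finfun t0 : T)); last first.
    move=> t /=; rewrite /Qs.
    apply/idP/idP.
      move=> /forallP h.
      by apply/eqP/ffunP => i; rewrite ffunE; apply/eqP; exact: (h i).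
    move=> /eqP ->.
    by apply/forallP => i; rewrite ffunE eqxx implybT.
  by rewrite big_nil scale1r.
rewrite cons_uniq => /andP [ks us] a.
have E1 := cons_dfwith k s (fun i => \sum_(j : J i) w i j *: u i j) a.
cbv beta in E1; rewrite E1 mlsum.
under eq_bigr => j _ do rewrite (dfwith_if _ _ ks) IH // scaler_sumr.
rewrite (partition_big (fun t : T => t k) xpredT) //.
apply: eq_bigr => j _.
transitivity (\sum_(t : T | Qs (k :: s) t && (t k == j))
   (w k j * \prod_(i <- s) w i (t i)) *:
     Phi (fun i => if i \in s then u i (t i) else dfwith a (u k j) i)).
  symmetry.
  rewrite (reindex_onto (fun t : T => upd t j) (fun t : T => upd t (t0 k))); last first.
    move=> t /andP [_ /eqP tk]; apply/ffunP => i.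
    case: (eqVneq k i) => [<-|ki]; first by rewrite upd_in.
    by rewrite !upd_out.
  apply: eq_big => t.
    rewrite upd_in eqxx andbT.
    apply/idP/idP.
      move=> /andP [/forallP h /eqP e].
      apply/forallP => i; apply/implyP => hi.
      case: (eqVneq k i) => [ki|ki].
        by move: ki hi => <- _; rewrite -e upd_in.
      have := h i; rewrite in_cons negb_or eq_sym ki hi upd_out //.
    move=> /forallP h; apply/andP; split.
      apply/forallP => i; apply/implyP; rewrite in_cons negb_or => /andP [ik iS].
      rewrite upd_out ?(eq_sym k) //; exact: (implyP (h i) iS).
    apply/eqP/ffunP => i; case: (eqVneq k i) => [<-|ki]; last by rewrite !upd_out.
    by rewrite upd_in; apply/esym/eqP; exact: (implyP (h k) ks).
  move=> Qt; rewrite scalerA; congr (_ *: _).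
    congr (_ * _); apply: eq_big_seq => i iS.
    by rewrite upd_out //; apply: contraNneq ks => ->.
  congr (Phi _); apply: functional_extensionality_dep => i.
  case: ifP => // iS; rewrite upd_out //; apply: contraNneq ks => ->; exact: iS.
apply: eq_bigr => t /andP [_ /eqP tk].
rewrite big_cons tk.
have E2 := cons_dfwith k s (fun i => u i (t i)) a; cbv beta in E2.
by rewrite E2 (dfwith_if _ _ ks) tk.
Qed.

Lemma expand :
  Phi (fun i => \sum_(j : J i) w i j *: u i j) =
  \sum_(t : T) (\prod_(i : I) w i (t i)) *: Phi (fun i => u i (t i)).
Proof.
have := @expand_seq (enum I) (enum_uniq _) (fun i => u i (t0 i)).
have hin : forall i : I, i \in enum I by move=> i; rewrite mem_enum.
have -> : (fun i => if i \in enum I then \sum_(j : J i) w i j *: u i j else u i (t0 i))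
   = (fun i => \sum_(j : J i) w i j *: u i j).
  by apply: functional_extensionality_dep => i; rewrite hin.
move=> ->; apply: eq_big => t.
  by apply/forallP => i; rewrite hin.
move=> _; rewrite big_enum /=; congr (_ *: Phi _).
by apply: functional_extensionality_dep => i; rewrite hin.
Qed.

End Expand.

Section Main.
Variables (F : fieldType) (n : nat) (m L : 'I_n -> nat).
Hypotheses (hn : (0 < n)%N) (hm : forall i, (2 <= m i)%N) (hL : forall i, (0 < L i)%N).

Local Notation T := {dffun forall p : slot m, 'I_(L (tag p))}.

Definition Rf (i : 'I_n) : nat := Rnum (m i) (L i).

Definition Ed (t : T) : nat :=
  (\sum_(p : slot m) Dnum m L (tag p) * ecoef (m (tag p)) (t p))%N.

Definition dig (t : T) (i : 'I_n) : nat :=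
  (\sum_(j < m i) ecoef (m i) (t (Tagged (fun i => 'I_(m i)) j)))%N.

Lemma Ed_split t : Ed t = (\sum_(i < n) Dnum m L i * dig t i)%N.
Proof.
rewrite /Ed /dig.
under [RHS]eq_bigr => i _ do rewrite big_distrr.
rewrite (@sig_big_dep nat 0 addn 'I_n (fun i => 'I_(m i)) xpredT (fun i _ => true)
  (fun i j => Dnum m L i * ecoef (m i) (t (Tagged (fun i => 'I_(m i)) j)))%N) /=.
by apply: eq_bigr => -[i j].
Qed.

Lemma dig_lt t i : (dig t i < Rf i)%N.
Proof.
by apply: digit_lt; [exact: hm | exact: hL | move=> j; exact: ltn_ord].
Qed.

Lemma Ed_lt t : (Ed t < K0num m L)%N.
Proof. rewrite Ed_split /K0num /Dnum; exact: (@radix_lt n hn _ _ (dig_lt t)). Qed.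

Lemma expo_lt (s : sliceidx L) : (expo m s < K0num m L)%N.
Proof.
rewrite /expo /K0num /Dnum.
under eq_bigr => i _ do rewrite -mulnA.
apply: (@radix_lt n hn Rf (fun i => m i * ecoef (m i) (s i))%N).
move=> i; apply: mdigit_lt => //; exact: hm.
Qed.

Lemma expo_inj : injective (@expo n m L).
Proof.
move=> s1 s2; rewrite /expo.
under eq_bigr => i _ do rewrite -mulnA.
under [in X in _ = X -> _]eq_bigr => i _ do rewrite -mulnA.
move=> e.
have := @radix_inj n hn Rf (fun i => m i * ecoef (m i) (s1 i))%N
   (fun i => m i * ecoef (m i) (s2 i))%N
   (fun i => mdigit_lt _ _ _ (hm i) (ltn_ord (s1 i)))
   (fun i => mdigit_lt _ _ _ (hm i) (ltn_ord (s2 i))) e.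
move=> h; apply/ffunP => i; apply/val_inj; apply: (ecoef_inj _ (hm i)).
by have /eqP := h i; rewrite eqn_pmul2l ?(ltnW (hm i)) // => /eqP.
Qed.

Definition diag (s : sliceidx L) : T := finfun (fun p => s (tag p)).

Lemma Ed_diag s : Ed (diag s) = expo m s.
Proof.
rewrite Ed_split /expo; apply: eq_bigr => i _; rewrite -mulnA /dig; congr (_ * _)%N.
under eq_bigr => j _ do rewrite ffunE /=.
by rewrite sum_nat_const card_ord.
Qed.

Lemma Ed_eq t s : Ed t = expo m s -> t = diag s.
Proof.
rewrite Ed_split /expo.
under [X in _ = X -> _]eq_bigr => i _ do rewrite -mulnA.
move=> e.
have h := @radix_inj n hn Rf (dig t) (fun i => m i * ecoef (m i) (s i))%N (dig_lt t)
  (fun i => mdigit_lt _ _ _ (hm i) (ltn_ord (s i))) e.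
apply/ffunP => -[i j]; rewrite ffunE /=; apply/val_inj => /=.
exact: (@digit_eq (m i) (s i) (fun j => nat_of_ord (t (Tagged (fun i => 'I_(m i)) j))) (hm i) (h i) j).
Qed.

Lemma poly_rep (W : vectType F) (V : slot m -> vectType F)
  (Phi : (forall p : slot m, V p) -> W) (hPhi : multilinear Phi)
  (A : forall p : slot m, 'I_(L (tag p)) -> V p) :
  exists c : nat -> W,
    (forall x : F, gfun Phi A x = \sum_(k < K0num m L) x ^+ k *: c k) /\
    (forall s : sliceidx L, c (expo m s) = sliced Phi A s).
Proof.
exists (fun k => \sum_(t : T | Ed t == k) Phi (fun p => A p (t p))); split.
  move=> x; rewrite /gfun /encoded.
  rewrite (@expand F (slot m) (fun p => (V p : lmodType F)) (W : lmodType F) Phi hPhi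
    (fun p => 'I_(L (tag p))) (fun p => Ordinal (hL (tag p)))
    (fun p s => x ^+ (Dnum m L (tag p) * ecoef (m (tag p)) s)) A).
  under eq_bigr => t _ do rewrite prodrXr.
  rewrite (partition_big (fun t : T => Ordinal (Ed_lt t)) xpredT) //.
  apply: eq_bigr => k _; rewrite scaler_sumr; apply: eq_big => t.
    by [].
  by move=> /eqP <-.
move=> s; rewrite (big_pred1 (diag s)).
  rewrite /sliced; congr (Phi _); apply: functional_extensionality_dep => p.
  by rewrite ffunE.
move=> t /=; apply/eqP/eqP => [/Ed_eq //|->]; exact: Ed_diag.
Qed.

Lemma decode (W : vectType F) (V : slot m -> vectType F)
  (Phi : (forall p : slot m, V p) -> W) (hPhi : multilinear Phi)
  (f : nat) (x : 'I_(f + K0num m L) -> F) (hx : injective x)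
  (Fail : {set 'I_(f + K0num m L)}) (hF : (#|Fail| <= f)%N) :
   exists dec : ('I_(f + K0num m L) -> W) -> sliceidx L -> W,
     (forall y1 y2 : 'I_(f + K0num m L) -> W,
        (forall k, k \notin Fail -> y1 k = y2 k) -> forall s, dec y1 s = dec y2 s) /\
     (forall A : forall p : slot m, 'I_(L (tag p)) -> V p,
        (forall s, dec (fun k => gfun Phi A (x k)) s = sliced Phi A s) /\
        \sum_(s : sliceidx L) dec (fun k => gfun Phi A (x k)) s = sigma_final Phi A).
Proof.
have hK : (K0num m L <= #|~: Fail|)%N.
  rewrite cardsCs card_ord setCK.
  apply: (@leq_trans (f + K0num m L - f)); first by rewrite addKn.
  exact: leq_sub2l.
pose h (l : 'I_(K0num m L)) : 'I_(f + K0num m L) := enum_val (widen_ord hK l).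
have hh : forall l, h l \notin Fail.
  by move=> l; have := enum_valP (widen_ord hK l); rewrite inE.
have hinj : injective h.
  by move=> l1 l2 /enum_val_inj /(congr1 val) /= /val_inj.
pose a : 'rV[F]_(K0num m L) := \row_l x (h l).
pose M := Vandermonde (K0num m L) a.
have hM : M \in unitmx.
  rewrite unitmxE unitfE det_Vandermonde.
  apply/prodf_neq0 => i _; apply/prodf_neq0 => j hij; rewrite !mxE subr_eq0.
  by apply/eqP => /hx /hinj ji; move: hij; rewrite ji ltnn.
pose U := invmx M.
exists (fun y s => \sum_(l < K0num m L) U l (Ordinal (expo_lt s)) *: y (h l)).
split.
  by move=> y1 y2 e s; apply: eq_bigr => l _; rewrite e // hh.
move=> A; have [c [hc hs]] := @poly_rep W V Phi hPhi A.
have key : forall s, \sum_(l < K0num m L) U l (Ordinal (expo_lt s)) *: gfun Phi A (x (h l))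
   = sliced Phi A s.
  move=> s; rewrite -hs; set e := Ordinal (expo_lt s).
  under eq_bigr => l _ do rewrite hc scaler_sumr.
  rewrite exchange_big /=.
  transitivity (\sum_(k < K0num m L) (M *m U) k e *: c k).
    apply: eq_bigr => k _; rewrite mxE scaler_suml; apply: eq_bigr => l _.
    by rewrite scalerA !mxE mulrC.
  rewrite mulmxV // (bigD1 e) //= big1 ?addr0.
    by rewrite mxE eqxx mulr1n scale1r.
  by move=> k ke; rewrite mxE (negbTE ke) mulr0n scale0r.
split; first exact: key.
by apply: eq_bigr => s _; rewrite key.
Qed.

End Main.

Theorem theorem2 (F : fieldType) (F_inf : forall s : seq F, exists x : F, x \notin s)
  (n : nat) (m L : 'I_n -> nat)
  (hn : (0 < n)%N) (hm : forall i, (2 <= m i)%N) (hL : forall i, (0 < L i)%N)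
  (W : vectType F) (V : slot m -> vectType F)
  (Phi : (forall p : slot m, V p) -> W) (hPhi : multilinear Phi) :
  (* g is a W-polynomial of degree <= K0 - 1 whose coefficient of
     x^(sum_i D_i m_i e_i(s_i)) is sigma_{s_1...s_n} *)
  (forall A : forall p : slot m, 'I_(L (tag p)) -> V p,
     exists c : nat -> W,
       (forall x : F, gfun Phi A x = \sum_(k < K0num m L) x ^+ k *: c k) /\
       (forall s : sliceidx L, (expo m s < K0num m L)%N) /\
       (forall s : sliceidx L, c (expo m s) = sliced Phi A s)) /\
  (* the N exponents are pairwise distinct *)
  injective (@expo n m L) /\
  (* f-resilience with K = f + K0 workers at distinct points *)
  (forall (f : nat) (x : 'I_(f + K0num m L) -> F), injective x ->
   forall Fail : {set 'I_(f + K0num m L)}, (#|Fail| <= f)%N ->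
   exists dec : ('I_(f + K0num m L) -> W) -> sliceidx L -> W,
     (forall y1 y2 : 'I_(f + K0num m L) -> W,
        (forall k, k \notin Fail -> y1 k = y2 k) -> forall s, dec y1 s = dec y2 s) /\
     (forall A : forall p : slot m, 'I_(L (tag p)) -> V p,
        (forall s, dec (fun k => gfun Phi A (x k)) s = sliced Phi A s) /\
        \sum_(s : sliceidx L) dec (fun k => gfun Phi A (x k)) s = sigma_final Phi A)) /\
  (* gain versus naive replication *)
  (forall f : nat,
     (Nnum L * (f + 1))%:Z - (f + K0num m L)%:Z
     = ((Nnum L)%:Z - 1) * (f + 1)%:Z - (K0num m L)%:Z + 1).
Proof.
split.
  move=> A; have [c [hc hs]] := @poly_rep F n m L hn hm hL W V Phi hPhi A.
  exists c; split; first exact: hc.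
  by split; [exact: (@expo_lt n m L hn hm) | exact: hs].
split; first exact: (@expo_inj n m L hn hm).
split.
  by move=> f x hx Fail hF; exact: (@decode F n m L hn hm hL W V Phi hPhi f x hx Fail hF).
move=> f; move: (Nnum L) (K0num m L) => N K.
rewrite PoszM !PoszD; lia.
Qed.
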